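(* Let $\alpha,\beta,\gamma\in\mathbb{Z}_2^n$. Then (1) $\mathrm{cadp}_0(\alpha,\beta,\gamma)\ne0$ if and only if $\mathrm{adp}^{\oplus}(\alpha,\beta\to\gamma)\ne0$; (2) $\mathrm{cadp}_1(\alpha,\beta,\gamma)\ne0$ if and only if $\mathrm{adp}^{\oplus}(\alpha,\beta\to\gamma)\ne0$ and $\gamma\ne0$.
   Context: For $x\in\mathbb{Z}_2^n$, $x=(x_0,\dots,x_{n-1})$ is identified with the integer $\sum_i x_i2^{n-1-i}$; $+$ is addition modulo $2^n$, $\oplus$ is bitwise XOR. $\mathrm{adp}^{\oplus}(\alpha,\beta\to\gamma)=4^{-n}\#\{(x,y): (x+\alpha)\oplus(y+\beta)=(x\oplus y)+\gamma\}$. Indices $0,\dots,7$ are identified with $\mathbb{Z}_2^3$ via $(p_0,p_1,p_2)\leftrightarrow4p_0+2p_1+p_2$; $e_0,\dots,e_7$ are the standard basis row vectors of $\mathbb{Q}^8$. $A_0$ is $\frac14$ times the $8\times8$ matrix with rows $(4,0,0,1,0,1,1,0)$, $(0,0,0,1,0,1,0,0)$, $(0,0,0,1,0,0,1,0)$, $(0,0,0,1,0,0,0,0)$, $(0,0,0,0,0,1,1,0)$, $(0,0,0,0,0,1,0,0)$, $(0,0,0,0,0,0,1,0)$, $(0,\dots,0)$, and $(A_k)_{i,j}=(A_0)_{i\oplus k,j\oplus k}$. For $\alpha,\beta,\gamma$ let $\omega_i=4\alpha_i+2\beta_i+\gamma_i$. With $L_0=(1,0,1,0,1,0,1,0)$,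 $L_1=(0,1,0,1,0,1,0,1)$, $\mathrm{cadp}_c(\alpha,\beta,\gamma)=L_cA_{\omega_0}\cdots A_{\omega_{n-1}}e_0^T$. (It is known that $\mathrm{adp}^{\oplus}(\alpha,\beta\to\gamma)=(1,\dots,1)A_{\omega_0}\cdots A_{\omega_{n-1}}e_0^T=\mathrm{cadp}_0+\mathrm{cadp}_1$.) *)

(* Defs.v *)
From HB Require Import structures.
From mathcomp Require Import all_boot all_order all_algebra.
Set Implicit Arguments. Unset Strict Implicit. Unset Printing Implicit Defensive.
Import Order.TTheory GRing.Theory Num.Theory.
Local Open Scope ring_scope.

Definition bv (n : nat) := {ffun 'I_n -> bool}.

(* x <-> sum_i x_i 2^(n-1-i)  (x_0 is the most significant bit) *)
Definition bv_to_nat n (x : bv n) : nat :=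
  (\sum_(i < n) (x i : nat) * 2 ^ (n.-1 - i))%N.

Definition bv_of_nat n (m : nat) : bv n :=
  [ffun i : 'I_n => odd (m %/ 2 ^ (n.-1 - i))].

Definition bv_add n (x y : bv n) : bv n :=
  bv_of_nat n ((bv_to_nat x + bv_to_nat y) %% 2 ^ n).

Definition bv_xor n (x y : bv n) : bv n := [ffun i => x i (+) y i].

Definition adp n (a b g : bv n) : rat :=
  (#|[set p : bv n * bv n |
       bv_xor (bv_add p.1 a) (bv_add p.2 b) == bv_add (bv_xor p.1 p.2) g]|)%:R
  / (4 ^ n)%:R.

(* indices 0..7 <-> Z_2^3 via (p0,p1,p2) <-> 4p0+2p1+p2; XOR of indices *)
Definition xor8 (i k : 'I_8) : 'I_8 :=
  inord (4 * (odd (i %/ 4) (+) odd (k %/ 4))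
         + 2 * (odd (i %/ 2) (+) odd (k %/ 2))
         + (odd i (+) odd k))%N.

Definition A0_rows : seq (seq nat) :=
  [:: [:: 4; 0; 0; 1; 0; 1; 1; 0]%N;
      [:: 0; 0; 0; 1; 0; 1; 0; 0]%N;
      [:: 0; 0; 0; 1; 0; 0; 1; 0]%N;
      [:: 0; 0; 0; 1; 0; 0; 0; 0]%N;
      [:: 0; 0; 0; 0; 0; 1; 1; 0]%N;
      [:: 0; 0; 0; 0; 0; 1; 0; 0]%N;
      [:: 0; 0; 0; 0; 0; 0; 1; 0]%N;
      [:: 0; 0; 0; 0; 0; 0; 0; 0]%N].

Definition A0 : 'M[rat]_8 :=
  \matrix_(i < 8, j < 8) ((nth 0%N (nth [::] A0_rows i) j)%:R / 4).

Definition Amat (k : 'I_8) : 'M[rat]_8 :=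
  \matrix_(i < 8, j < 8) A0 (xor8 i k) (xor8 j k).

Definition omega n (a b g : bv n) (i : 'I_n) : 'I_8 :=
  inord (4 * a i + 2 * b i + g i)%N.

Definition Lvec (c : bool) : 'rV[rat]_8 := \row_(j < 8) (odd j == c)%:R.

Definition e0 : 'rV[rat]_8 := \row_(j < 8) (j == 0%N :> nat)%:R.

Definition Aprod n (a b g : bv n) : 'M[rat]_8 :=
  \prod_(i < n) Amat (omega a b g i).

Definition cadp (c : bool) n (a b g : bv n) : rat :=
  (Lvec c *m Aprod a b g *m (e0^T)) 0 0.

(* Main.v *)
Require Import Defs.
From HB Require Import structures.
From mathcomp Require Import all_boot all_order all_algebra zify.
Import Order.TTheory GRing.Theory Num.Theory.

Definition maj (x y z : bool) := (x && y) || (x && z) || (y && z).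
Definition val (m : nat) (f : nat -> bool) : nat := \sum_(k < m) f k * 2 ^ k.

Lemma valS m f : val m.+1 f = val m f + f m * 2 ^ m.
Proof. by rewrite /val big_ord_recr. Qed.

Lemma val_lt m f : val m f < 2 ^ m.
Proof.
elim: m => [|m IH]; first by rewrite /val big_ord0.
rewrite valS expnS; case: (f m) => /=; lia.
Qed.

Lemma val_ext {m f f'} : (forall k, k < m -> f k = f' k) -> val m f = val m f'.
Proof. by move=> H; apply: eq_bigr => i _; rewrite H. Qed.

Definition cy m f h := 2 ^ m <= val m f + val m h.

Lemma cy_ext m f f' h h' : (forall k, k < m -> f k = f' k) ->
  (forall k, k < m -> h k = h' k) -> cy m f h = cy m f' h'.
Proof. by move=> H1 H2; rewrite /cy (val_ext (m:=m) H1) (val_ext (m:=m) H2). Qed.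

Lemma cyS k f h : cy k.+1 f h = maj (f k) (h k) (cy k f h).
Proof.
rewrite /cy !valS expnS.
have := val_lt k f; have := val_lt k h.
move: (val k f) (val k h) (2 ^ k) => V W P h1 h2.
rewrite /maj; case: (f k); case: (h k) => /=; rewrite ?mul1n ?mul0n ?addn0;
  apply/idP/idP; lia.
Qed.

Lemma div_one s P : 0 < P -> s < 2 * P -> s %/ P = (P <= s).
Proof.
move=> P0 h; case: leqP => hs.
  apply/eqP; rewrite eqn_leq; apply/andP; split.
    by rewrite -ltnS ltn_divLR // mulnC.
  by rewrite leq_divRL // mul1n.
by rewrite divn_small.
Qed.

Lemma bit_sum k m f h : k < m ->
  odd ((val m f + val m h) %/ 2 ^ k) = f k (+) h k (+) cy k f h.
Proof.
elim: m => [|m IH] //; rewrite ltnS leq_eqVlt => /orP [/eqP ->| km].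
  rewrite !valS addnACA -mulnDl addnC divnMDl ?expn_gt0 //.
  rewrite div_one ?expn_gt0 //; last first.
    have := val_lt m f; have := val_lt m h; rewrite mul2n -addnn; lia.
  by rewrite oddD oddD !oddb.
rewrite !valS addnACA -mulnDl addnC.
have -> : 2 ^ m = 2 ^ (m - k) * 2 ^ k by rewrite -expnD subnK // ltnW.
rewrite mulnA divnMDl ?expn_gt0 // oddD IH // oddM.
have -> : odd (2 ^ (m - k)) = false.
  by rewrite oddX orbF subn_eq0 leqNgt km.
by rewrite andbF.
Qed.

Lemma mod_bit k n M : k < n -> odd ((M %% 2 ^ n) %/ 2 ^ k) = odd (M %/ 2 ^ k).
Proof.
move=> kn.
have -> : 2 ^ n = 2 ^ (n - k) * 2 ^ k by rewrite -expnD subnK // ltnW.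
by rewrite -modn_divl odd_mod // oddX orbF subn_eq0 leqNgt kn.
Qed.

Section BV.
Variable n : nat.

Definition nb (x : bv n) (k : nat) : bool :=
  if @insub nat (fun i => i < n) 'I_n (n.-1 - k) is Some i then (k < n) && x i else false.

Lemma nbE (x : bv n) (i : 'I_n) : nb x (n.-1 - i) = x i.
Proof.
have iln := ltn_ord i.
rewrite /nb; case: insubP => [j _ Hj|].
  have -> : j = i by apply: val_inj; rewrite /= Hj; lia.
  have -> : n.-1 - i < n by lia.
  by [].
lia.
Qed.

Lemma nb_ge (x : bv n) k : n <= k -> nb x k = false.
Proof. move=> h; rewrite /nb; case: insubP => // j _ _; have -> : (k < n) = false by apply/negbTE; rewrite -leqNgt. by []. Qed.

Lemma nb_lt (x : bv n) k (hk : k < n) : nb x k = x (Ordinal (n := n) (m := n.-1 - k) ltac:(lia)).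
Proof.
set i := Ordinal _. have -> : k = n.-1 - i by rewrite /=; lia.
by rewrite nbE.
Qed.

Lemma bv_to_nat_val (x : bv n) : bv_to_nat x = val n (nb x).
Proof.
rewrite /bv_to_nat /val (reindex_inj rev_ord_inj) /=; apply: eq_bigr => i _.
have e : n.-1 - (n - i.+1) = i by have := ltn_ord i; lia.
by rewrite e -{2}e -[n - i.+1]/(nat_of_ord (rev_ord i)) nbE.
Qed.

Lemma nb_xor (x y : bv n) k : nb (bv_xor x y) k = nb x k (+) nb y k.
Proof.
rewrite /nb; case: insubP => // j _ _; rewrite ffunE; by case: (k < n).
Qed.

Lemma bv_add_bit (x y : bv n) (i : 'I_n) :
  bv_add x y i = nb x (n.-1 - i) (+) nb y (n.-1 - i) (+) cy (n.-1 - i) (nb x) (nb y).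
Proof.
have hk : n.-1 - i < n by have := ltn_ord i; lia.
by rewrite /bv_add /bv_of_nat ffunE !bv_to_nat_val mod_bit // bit_sum.
Qed.

End BV.
Arguments nb {n}.

Definition b2 (i : nat) := odd (i %/ 4).
Definition b1 (i : nat) := odd (i %/ 2).
Definition b0 (i : nat) := odd i.
Definition enc (p q r : bool) : nat := 4 * p + 2 * q + r.
Definition okt l j := ~~ (b2 l (+) b1 l (+) b0 l (+) b2 j (+) b1 j (+) b0 j).
Definition tr l j x y := enc (maj x (b2 l) (b2 j)) (maj y (b1 l) (b1 j)) (maj (x (+) y) (b0 l) (b0 j)).
Definition edge l i j := okt l j && [|| i == tr l j true true, i == tr l j true false, i == tr l j false true | i == tr l j false false].
Definition post l (S : seq bool) : seq bool :=
  [seq has (fun j => nth false S j && edge l i j) (iota 0 8) | i <- iota 0 8].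
Definition init : seq bool := [:: true; false; false; false; false; false; false; false].
Definition hasp (P : nat -> bool) (S : seq bool) := has (fun j => nth false S j && P j) (iota 0 8).
Fixpoint RWg (L : nat -> nat) m := if m is m'.+1 then post (L m') (RWg L m') else init.

Lemma b2enc p q r : b2 (enc p q r) = p. Proof. by case: p; case: q; case: r. Qed.
Lemma b1enc p q r : b1 (enc p q r) = q. Proof. by case: p; case: q; case: r. Qed.
Lemma b0enc p q r : b0 (enc p q r) = r. Proof. by case: p; case: q; case: r. Qed.
Lemma enc_lt p q r : enc p q r < 8. Proof. by case: p; case: q; case: r. Qed.
Lemma enc_bits j : j < 8 -> j = enc (b2 j) (b1 j) (b0 j).
Proof. by do 8?[case: j => [|j] //]. Qed.

Lemma post_nth l S i : i < 8 -> nth false (post l S) i = has (fun j => nth false S j && edge l i j) (iota 0 8).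
Proof. by move=> h; rewrite (nth_map 0) ?size_iota // nth_iota. Qed.

Lemma post_big {l S i} : nth false (post l S) i -> i < 8.
Proof. by case: ltnP => // h; rewrite nth_default // size_map size_iota. Qed.

Lemma init_nth s : nth false init s = (s == 0).
Proof. do 8?[case: s => [|s] //]; by rewrite /init /= nth_nil. Qed.

Lemma xor_cond x a c1 y b c2 g c3 :
  (x (+) a (+) c1 (+) (y (+) b (+) c2) == x (+) y (+) g (+) c3) = ~~ (a (+) b (+) g (+) c1 (+) c2 (+) c3).
Proof. by case: x; case: a; case: c1; case: y; case: b; case: c2; case: g; case: c3. Qed.


Definition xr (i k : nat) : nat := 4 * (odd (i %/ 4) (+) odd (k %/ 4))
         + 2 * (odd (i %/ 2) (+) odd (k %/ 2))
         + (odd i (+) odd k).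

Lemma E2c : all (fun k => all (fun i => all (fun j =>
  (nth 0 (nth [::] A0_rows (xr i k)) (xr j k) != 0) == edge k i j) (iota 0 8)) (iota 0 8)) (iota 0 8).
Proof. vm_compute. reflexivity. Qed.

Lemma xor8_val (i k : 'I_8) : nat_of_ord (xor8 i k) = xr i k.
Proof.
rewrite /xor8 inordK // /xr.
by case: (odd (i %/ 4) (+) odd (k %/ 4)); case: (odd (i %/ 2) (+) odd (k %/ 2)); case: (odd i (+) odd k).
Qed.

Local Open Scope ring_scope.

Lemma Amat_E (k i j : 'I_8) : Amat k i j = (nth 0%N (nth [::] A0_rows (xr i k)) (xr j k))%:R / 4.
Proof. by rewrite /Amat !mxE !xor8_val. Qed.

Lemma Amat_ge0 (k i j : 'I_8) : 0 <= Amat k i j.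
Proof. by rewrite Amat_E divr_ge0 // ler0n. Qed.

Lemma Amat_neq0 (k i j : 'I_8) : (Amat k i j != 0) = edge k i j.
Proof.
rewrite Amat_E mulf_eq0 invr_eq0 negb_or pnatr_eq0 andbT.
have := E2c => /allP /(_ k); rewrite mem_iota ltn_ord => /(_ isT) /allP /(_ i).
rewrite mem_iota ltn_ord => /(_ isT) /allP /(_ j); rewrite mem_iota ltn_ord => /(_ isT) /eqP.
by [].
Qed.

Lemma sum_pos_neq0 (u v : 'I_8 -> rat) : (forall j, 0 <= u j) -> (forall j, 0 <= v j) ->
  (\sum_j u j * v j != 0) = [exists j, (u j != 0) && (v j != 0)].
Proof.
move=> hu hv; apply/idP/existsP.
  move=> H; apply/existsP; apply: contraR H => /existsPn H.
  by apply/eqP; apply: big1 => j _; have := H j; rewrite negb_and !negbK => /orP [] /eqP ->;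
    rewrite ?mul0r ?mulr0.
move=> [j /andP [h1 h2]]; apply/negP => /eqP H.
have := psumr_eq0P (P := predT) (fun i _ => mulr_ge0 (hu i) (hv i)) H (i := j) isT.
by move/eqP; rewrite mulf_eq0 (negbTE h1) (negbTE h2).
Qed.

Lemma exists_iota (P : nat -> bool) : [exists j : 'I_8, P j] = has P (iota 0 8).
Proof.
apply/existsP/hasP => [[j hj] | [j]]; first by exists (nat_of_ord j) => //; rewrite mem_iota ltn_ord.
by rewrite mem_iota /= => hj Pj; exists (Ordinal hj).
Qed.

Lemma mulE8 (A B : 'M[rat]_8) : A * B = A *m B. Proof. by []. Qed.

Lemma mat_main n (w : 'I_n -> 'I_8) (L : nat -> nat) :
  (forall i : 'I_n, nat_of_ord (w i) = L (n.-1 - i)%N) ->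
  forall s : 'I_8, 0 <= ((\prod_(i < n) Amat (w i)) *m e0^T) s 0 /\
    (((\prod_(i < n) Amat (w i)) *m e0^T) s 0 != 0) = nth false (RWg L n) s.
Proof.
elim: n w => [|n IH] w Hw s.
  rewrite big_ord0 mul1mx /e0 !mxE /= init_nth.
  by rewrite ler0n pnatr_eq0; split => //; case: (nat_of_ord s) => [|?].
have -> : \prod_(i < n.+1) Amat (w i) = Amat (w ord0) * \prod_(i < n) Amat (w (lift ord0 i)).
  exact: big_ord_recl.
rewrite mulE8 -mulmxA.
have Hw' : forall i : 'I_n, nat_of_ord (w (lift ord0 i)) = L (n.-1 - i)%N.
  by move=> i; rewrite Hw; congr (L _); rewrite /= /bump leq0n add1n; lia.
have IH' := IH _ Hw'.
rewrite mxE; split.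
  by apply: sumr_ge0 => j _; apply: mulr_ge0; [apply: Amat_ge0 | apply: (IH' j).1].
rewrite (sum_pos_neq0 (fun j => Amat (w ord0) s j) (fun j => _ j 0)); last 2 first.
  by move=> j; apply: Amat_ge0.
  by move=> j; apply: (IH' j).1.
rewrite /= post_nth ?ltn_ord // -exists_iota.
apply: eq_existsb => j; rewrite Amat_neq0 (IH' j).2 andbC.
have -> : nat_of_ord (w ord0) = L n by rewrite Hw /= subn0.
by [].
Qed.
Local Close Scope ring_scope.
Section Auto.
Variables (n : nat) (a b g : bv n).
Definition fxor (f h : nat -> bool) := fun j => f j (+) h j.
Definition condk k f h := ~~ (nb a k (+) nb b k (+) nb g k (+) cy k f (nb a) (+) cy k h (nb b)
   (+) cy k (fxor f h) (nb g)).
Definition Lw k := enc (nb a k) (nb b k) (nb g k).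
Definition st m f h := enc (cy m f (nb a)) (cy m h (nb b)) (cy m (fxor f h) (nb g)).

Lemma cond_equiv (x y : bv n) :
  (bv_xor (bv_add x a) (bv_add y b) == bv_add (bv_xor x y) g) =
  [forall i : 'I_n, condk (n.-1 - i) (nb x) (nb y)].
Proof.
apply/eqP/forallP => [H i | H].
  have := congr1 (fun f : bv n => f i) H; rewrite /= ffunE !bv_add_bit => /eqP.
  rewrite (@cy_ext _ (nb (bv_xor x y)) (fxor (nb x) (nb y)) (nb g) (nb g)) //; last first.
    by move=> k _; rewrite nb_xor.
  by rewrite nb_xor xor_cond.
apply/ffunP => i; rewrite ffunE !bv_add_bit; apply/eqP.
rewrite (@cy_ext _ (nb (bv_xor x y)) (fxor (nb x) (nb y)) (nb g) (nb g)); last 2 first.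
  by move=> k _; rewrite nb_xor.
  by [].
by rewrite nb_xor xor_cond; apply: H.
Qed.

Lemma cond_equiv' (x y : bv n) :
  (bv_xor (bv_add x a) (bv_add y b) == bv_add (bv_xor x y) g) <->
  (forall k, k < n -> condk k (nb x) (nb y)).
Proof.
rewrite cond_equiv; split => [/forallP H k hk | H].
  have := H (Ordinal (n := n) (m := n.-1 - k) ltac:(lia)); rewrite /=.
  by have -> : n.-1 - (n.-1 - k) = k by lia.
by apply/forallP => i; apply: H; have := ltn_ord i; lia.
Qed.

Lemma condk_ext k f h f' h' : (forall j, j < k -> f j = f' j) -> (forall j, j < k -> h j = h' j) ->
  condk k f h = condk k f' h' /\ st k f h = st k f' h'.
Proof.
move=> H1 H2.
have E1 := @cy_ext k f f' (nb a) (nb a) H1 (fun _ _ => erefl).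
have E2 := @cy_ext k h h' (nb b) (nb b) H2 (fun _ _ => erefl).
have E3 : cy k (fxor f h) (nb g) = cy k (fxor f' h') (nb g).
  by apply: cy_ext => // j hj; rewrite /fxor H1 // H2.
by rewrite /condk /st E1 E2 E3.
Qed.

Lemma st_lt m f h : st m f h < 8. Proof. exact: enc_lt. Qed.

Lemma stS m f h : st m.+1 f h = tr (Lw m) (st m f h) (f m) (h m).
Proof. by rewrite /st /tr /Lw !b2enc !b1enc !b0enc !cyS. Qed.

Lemma forward f h : (forall k, k < n -> condk k f h) ->
  forall m, m <= n -> nth false (RWg Lw m) (st m f h).
Proof.
move=> H; elim => [|m IH] hm.
  by rewrite /= init_nth /st /cy /val !big_ord0.
rewrite /= post_nth ?st_lt //; apply/hasP; exists (st m f h).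
  by rewrite mem_iota st_lt.
rewrite IH 1?ltnW //= /edge /okt stS.
have := H m hm; rewrite /condk /Lw /st !b2enc !b1enc !b0enc => ->.
by case: (f m); case: (h m); rewrite eqxx ?orbT.
Qed.

Lemma backward m s : nth false (RWg Lw m) s ->
  exists f h, (forall k, k < m -> condk k f h) /\ st m f h = s.
Proof.
elim: m s => [|m IH] s /=.
  rewrite init_nth => /eqP ->; exists (fun _ => false), (fun _ => false); split => //.
  by rewrite /st /cy /val !big_ord0.
move=> Hs; have s8 := post_big Hs; move: Hs; rewrite post_nth //.
case/hasP => j; rewrite mem_iota /= => j8 /andP [/IH [f [h [Hc Hst]]]].
rewrite /edge => /andP [Hok Hor].
have [x [y Hxy]] : exists x y, s = tr (Lw m) j x y.
  move: Hor => /or4P [] /eqP ->; by do 2 eexists.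
pose f' k := if k == m then x else f k.
pose h' k := if k == m then y else h k.
have ext : forall k, k <= m -> condk k f h = condk k f' h' /\ st k f h = st k f' h'.
  move=> k hk; apply: condk_ext => i hi; rewrite /f' /h'; have -> : (i == m) = false by lia.
  by []. by [].
exists f', h'; split.
  move=> k; rewrite ltnS leq_eqVlt => /orP [/eqP -> | hk].
    rewrite -(ext m (leqnn m)).1.
    move: Hok; rewrite /okt -Hst /Lw /st /condk !b2enc !b1enc !b0enc.
    by [].
  by rewrite -(ext k (ltnW hk)).1; apply: Hc.
rewrite stS -(ext m (leqnn m)).2 Hst Hxy /f' /h' eqxx.
by [].
Qed.

Definition Good : seq (seq bool * bool) := [::
  ([:: false; false; false; false; false; false; false; false], false);
  ([:: false; false; false; false; false; false; false; false], true);
  ([:: true; false; false; false; false; false; false; false], false);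
  ([:: true; true; true; true; false; false; false; false], true);
  ([:: true; true; true; true; true; true; false; false], true);
  ([:: true; true; true; true; true; true; true; false], true);
  ([:: true; true; true; true; true; true; false; true], true);
  ([:: true; true; true; true; true; false; true; false], true);
  ([:: true; true; true; true; true; false; true; true], true);
  ([:: true; true; true; true; false; true; true; true], true);
  ([:: true; true; true; true; false; true; false; true], true);
  ([:: true; true; true; true; false; false; true; true], true);
  ([:: true; true; true; false; true; true; true; false], true);
  ([:: true; true; true; false; true; true; true; true], true);
  ([:: true; true; false; true; true; true; true; true], true);
  ([:: true; true; false; true; true; true; false; true], true);
  ([:: true; true; false; false; true; true; false; false], true);
  ([:: true; true; false; false; true; true; true; true], true);
  ([:: true; false; true; true; true; true; true; true], true);
  ([:: true; false; true; true; true; false; true; true], true);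
  ([:: true; false; true; false; true; true; true; true], true);
  ([:: true; false; true; false; true; false; true; false], false);
  ([:: false; true; true; true; true; true; true; true], true);
  ([:: false; true; true; true; false; true; true; true], true);
  ([:: false; true; false; true; true; true; true; true], true);
  ([:: false; false; true; true; true; true; true; true], true)].
Local Open Scope ring_scope.
Lemma Good_closed : all (fun p => all (fun l => (post l p.1, p.2 || odd l) \in Good) (iota 0 8)) Good.
Proof. vm_compute. reflexivity. Qed.
Lemma Good_prop : all (fun p => (hasp (fun j => ~~ odd j) p.1 == hasp predT p.1) &&
   (hasp odd p.1 == hasp predT p.1 && p.2)) Good.
Proof. vm_compute. reflexivity. Qed.
Lemma Good_init : (init, false) \in Good.
Proof. vm_compute. reflexivity. Qed.

Lemma Lw_val (i : 'I_n) : nat_of_ord (omega a b g i) = Lw (n.-1 - i)%N.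
Proof.
rewrite /omega /Lw /enc !nbE inordK //.
by case: (a i); case: (b i); case: (g i).
Qed.

Lemma vec_E (s : 'I_8) : 0 <= (Aprod a b g *m e0^T) s 0 /\
  ((Aprod a b g *m e0^T) s 0 != 0) = nth false (RWg Lw n) s.
Proof. rewrite /Aprod; exact: (@mat_main n (omega a b g) Lw Lw_val s). Qed.

Lemma cadp_neq0 c : (cadp c a b g != 0) = hasp (fun j => odd j == c) (RWg Lw n).
Proof.
rewrite /cadp -mulmxA mxE.
rewrite (sum_pos_neq0 (fun j => Lvec c 0 j) (fun j => (Aprod a b g *m e0^T) j 0)); last 2 first.
  by move=> j; rewrite mxE ler0n.
  by move=> j; apply: (vec_E j).1.
rewrite /hasp -exists_iota; apply: eq_existsb => j.
rewrite (vec_E j).2 mxE pnatr_eq0 andbC.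
by case: (odd j == c).
Qed.

Lemma adp_neq0 : (adp a b g != 0) = hasp predT (RWg Lw n).
Proof.
rewrite /adp mulf_eq0 invr_eq0 negb_or !pnatr_eq0 expn_eq0 /= andbT cards_eq0.
apply/set0Pn/idP.
  case=> [[x y]]; rewrite inE /= => /cond_equiv' H.
  apply/hasP; exists (st n (nb x) (nb y)); first by rewrite mem_iota st_lt.
  by rewrite forward // andbT.
case/hasP => j _ /andP [/backward [f [h [Hc _]]] _].
exists ([ffun i : 'I_n => f (n.-1 - i)%N], [ffun i : 'I_n => h (n.-1 - i)%N]).
rewrite inE /=; apply/cond_equiv' => k hk.
have E : forall (u : nat -> bool) j, (j < n)%N -> nb [ffun i : 'I_n => u (n.-1 - i)%N] j = u j.
  by move=> u j' hj; rewrite nb_lt // ffunE /=; congr u; lia.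
have [-> _] := @condk_ext k (nb [ffun i : 'I_n => f (n.-1 - i)%N]) (nb [ffun i : 'I_n => h (n.-1 - i)%N]) f h
   (fun j hj => E f j (ltn_trans hj hk)) (fun j hj => E h j (ltn_trans hj hk)).
exact: Hc.
Qed.

Lemma Good_inv m : (RWg Lw m, has (fun k => odd (Lw k)) (iota 0 m)) \in Good.
Proof.
elim: m => [|m IH]; first exact: Good_init.
rewrite -addn1 iotaD has_cat /= orbF addn1.
have := Good_closed => /allP /(_ _ IH) /allP /(_ (Lw m)).
by rewrite mem_iota enc_lt => /(_ isT).
Qed.

Lemma flag_g : has (fun k => odd (Lw k)) (iota 0 n) = (g != [ffun => false]).
Proof.
have oL k : odd (Lw k) = nb g k by rewrite /Lw -/(b0 _) b0enc.
apply/hasP/idP.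
  move=> [k]; rewrite mem_iota /= oL => hk; rewrite nb_lt // => Hg.
  by apply/eqP => E; move: Hg; rewrite E ffunE.
move=> H; have [i Hi] : exists i, g i.
  apply/existsP; apply: contraR H => /existsPn H; apply/eqP/ffunP => i.
  by rewrite ffunE; apply/negbTE.
exists (n.-1 - i)%N; last by rewrite oL nbE.
by rewrite mem_iota /=; have := ltn_ord i; lia.
Qed.

End Auto.

Local Open Scope ring_scope.

Theorem proposition3 (n : nat) (a b g : bv n) :
  (cadp false a b g != 0 <-> adp a b g != 0) /\
  (cadp true a b g != 0 <-> adp a b g != 0 /\ g != [ffun => false]).
Proof.
have := Good_prop => /allP /(_ _ (@Good_inv n a b g n)) /= /andP [/eqP E1 /eqP E2].
rewrite !cadp_neq0 adp_neq0 -(@flag_g n a b g).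
have -> : hasp (fun j => odd j == false) (RWg (Lw n a b g) n) = hasp (fun j => ~~ odd j) (RWg (Lw n a b g) n).
  by apply: eq_has => j; case: (odd j).
have -> : hasp (fun j => odd j == true) (RWg (Lw n a b g) n) = hasp odd (RWg (Lw n a b g) n).
  by apply: eq_has => j; case: (odd j).
rewrite E1 E2; split; first by [].
by split => [/andP [-> ->] | [-> ->]].
Qed.
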